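(* Let $\mathsf V$ be a quantale in which $k=\top$ is the top element and for which there is a sequence $(u_n)_{n\in\mathbb N}$ with $\bigvee_n u_n=k$, $u_n\ll k$ and $u_n\le u_{n+1}$ for all $n$. (1) If $X=(X,a)$ is a symmetric $\mathsf V$-category and $\varphi:E\rightharpoonup X$, $\psi:X\rightharpoonup E$ are modules with $\varphi\dashv\psi$, then $\varphi(x)=\psi(x)$ for all $x\in X$. (2) If $M$ is a sub-$\mathsf V$-category of a $\mathsf V$-category $Y=(Y,b)$ and $M$ is symmetric, then $\overline M$ (with the restricted structure) is symmetric. (3) In particular, for a symmetric $\mathsf V$-category $X$, its Cauchy completion $\widetilde X$ is symmetric.
   Context: A quantale $(\mathsf V,\otimes,k)$ is a complete anti-symmetric lattice with an associative, commutative operation $\otimes$ with neutral element $k$ distributing over arbitrary suprema; $\hom(u,-)$ is the right adjoint of $u\otimes-$. $u\ll x$ means: for every $S\subseteq\mathsf V$ with $x\le\bigvee S$ there is $s\in S$ with $u\le s$. A $\mathsf V$-category $(X,a)$ is a set with $a:X\times X\to\mathsf V$ such that $k\le a(x,x)$ and $a(x,y)\otimes a(y,z)\le a(x,z)$; it is symmetric if $a(x,y)=a(y,x)$ for all $x,y$; a sub-$\mathsf V$-category carries the restricted structure. $E=(\{\star\},k)$; modules $\varphi:E\rightharpoonup X$ and $\psi:X\rightharpoonup E$ are maps $X\to\mathsf V$ with $\varphi(x)\otimes a(x,y)\le\varphi(y)$ and $a(x,y)\otimes\psi(y)\le\psi(x)$; $\varphi\dashv\psi$ means $k\le\bigvee_x\varphi(x)\otimes\psi(x)$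 and $\psi(x)\otimes\varphi(y)\le a(x,y)$ for all $x,y$. For $M\subseteq Y$, $\overline M=\{y\in Y\mid k\le\bigvee_{z\in M}b(y,z)\otimes b(z,y)\}$. The Cauchy completion $\widetilde X$ is the set of right adjoint modules $\psi:X\rightharpoonup E$ with structure $[\psi,\psi']=\bigwedge_{x}\hom(\psi(x),\psi'(x))$. *)

(* Defs.v *)
Set Implicit Arguments.
Unset Strict Implicit.

Record quantale := Quantale {
  qcar :> Type;
  qle : qcar -> qcar -> Prop;
  qle_refl : forall x, qle x x;
  qle_trans : forall x y z, qle x y -> qle y z -> qle x z;
  qle_antisym : forall x y, qle x y -> qle y x -> x = y;
  qsup : (qcar -> Prop) -> qcar;
  qsup_ub : forall (S : qcar -> Prop) x, S x -> qle x (qsup S);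
  qsup_least : forall (S : qcar -> Prop) y,
      (forall x, S x -> qle x y) -> qle (qsup S) y;
  qtens : qcar -> qcar -> qcar;
  qk : qcar;
  qtens_assoc : forall x y z, qtens x (qtens y z) = qtens (qtens x y) z;
  qtens_comm : forall x y, qtens x y = qtens y x;
  qtens_k : forall x, qtens qk x = x;
  qtens_sup : forall x (S : qcar -> Prop),
      qtens x (qsup S) = qsup (fun v => exists s, S s /\ v = qtens x s)
}.

Arguments qle {q}.
Arguments qsup {q}.
Arguments qtens {q}.

Section Quantale.
Variable V : quantale.

Definition qinf (S : V -> Prop) : V :=
  qsup (fun w => forall s, S s -> qle w s).

(* hom(u,-), the right adjoint of u ⊗ - *)
Definition qhom (u v : V) : V := qsup (fun w => qle (qtens u w) v).

Definition way_below (u x : V) : Prop :=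
  forall S : V -> Prop, qle x (qsup S) -> exists s, S s /\ qle u s.

Definition is_Vcat (X : Type) (a : X -> X -> V) : Prop :=
  (forall x, qle (qk V) (a x x)) /\
  (forall x y z, qle (qtens (a x y) (a y z)) (a x z)).

Definition symmetric (X : Type) (a : X -> X -> V) : Prop :=
  forall x y, a x y = a y x.

Definition module_from_E (X : Type) (a : X -> X -> V) (phi : X -> V) : Prop :=
  forall x y, qle (qtens (phi x) (a x y)) (phi y).

Definition module_to_E (X : Type) (a : X -> X -> V) (psi : X -> V) : Prop :=
  forall x y, qle (qtens (a x y) (psi y)) (psi x).

Definition mod_adj (X : Type) (a : X -> X -> V) (phi psi : X -> V) : Prop :=
  qle (qk V) (qsup (fun v => exists x, v = qtens (phi x) (psi x))) /\
  (forall x y, qle (qtens (psi x) (phi y)) (a x y)).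

Definition vclosure (Y : Type) (b : Y -> Y -> V) (M : Y -> Prop) : Y -> Prop :=
  fun y => qle (qk V) (qsup (fun v => exists z, M z /\ v = qtens (b y z) (b z y))).

Definition right_adjoint_module (X : Type) (a : X -> X -> V) (psi : X -> V) : Prop :=
  module_to_E a psi /\
  exists phi, module_from_E a phi /\ mod_adj a phi psi.

Definition cauchy_completion (X : Type) (a : X -> X -> V) : Type :=
  { psi : X -> V | right_adjoint_module a psi }.

Definition cauchy_hom (X : Type) (a : X -> X -> V)
  (p q : cauchy_completion a) : V :=
  qinf (fun v => exists x, v = qhom (proj1_sig p x) (proj1_sig q x)).

End Quantale.

(* Main.v *)
Require Import Defs.
From Stdlib Require Import Lia.
Set Implicit Arguments.
Unset Strict Implicit.

Lemma tmono (V : quantale) (z x y : V) : qle x y -> qle (qtens z x) (qtens z y).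
Proof.
  intro H.
  assert (E : y = qsup (fun v => v = x \/ v = y)).
  { apply qle_antisym.
    - apply qsup_ub; auto.
    - apply qsup_least. intros w [->| ->]; auto using qle_refl. }
  rewrite E, qtens_sup. apply qsup_ub. exists x; split; auto.
Qed.

Lemma tmono2 (V : quantale) (x x' y y' : V) :
  qle x x' -> qle y y' -> qle (qtens x y) (qtens x' y').
Proof.
  intros H1 H2. apply qle_trans with (qtens x y').
  - apply tmono; auto.
  - rewrite (qtens_comm x), (qtens_comm x'). apply tmono; auto.
Qed.

Lemma ttop (V : quantale) (k_top : forall v : V, qle v (qk V)) (x y : V) :
  qle (qtens x y) y.
Proof.
  apply qle_trans with (qtens (qk V) y).
  - apply tmono2; auto using qle_refl.
  - rewrite qtens_k. apply qle_refl.
Qed.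

Lemma Lsupk (V : quantale) (S : V -> Prop) (v c : V) :
  qle (qk V) (qsup S) -> (forall s, S s -> qle (qtens v s) c) -> qle v c.
Proof.
  intros H1 H2.
  apply qle_trans with (qtens v (qsup S)).
  - apply qle_trans with (qtens v (qk V)).
    + rewrite qtens_comm, qtens_k. apply qle_refl.
    + apply tmono; auto.
  - rewrite qtens_sup. apply qsup_least. intros w [s [Hs ->]]. auto.
Qed.

Lemma L1 (V : quantale) (u : nat -> V)
  (u_sup : qsup (fun v => exists n, v = u n) = qk V) (v c : V) :
  (forall n, qle (qtens (u n) v) c) -> qle v c.
Proof.
  intro H. apply (@Lsupk V (fun v => exists n, v = u n)).
  - rewrite u_sup. apply qle_refl.
  - intros s [n ->]. rewrite qtens_comm. auto.
Qed.

Lemma umono (V : quantale) (u : nat -> V)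
  (u_mono : forall n, qle (u n) (u (S n))) n m : n <= m -> qle (u n) (u m).
Proof.
  induction 1. apply qle_refl. eapply qle_trans; eauto.
Qed.

Lemma L4 (V : quantale) (u : nat -> V)
  (u_sup : qsup (fun v => exists n, v = u n) = qk V)
  (u_mono : forall n, qle (u n) (u (S n))) (v c : V) :
  (forall n, qle (qtens (u n) (qtens (u n) (qtens (u n) (qtens (u n) v)))) c) ->
  qle v c.
Proof.
  intro H.
  apply (L1 u_sup); intro a.
  apply (L1 u_sup); intro b.
  apply (L1 u_sup); intro d.
  apply (L1 u_sup); intro e.
  eapply qle_trans; [|apply (H (a+b+d+e))].
  repeat apply tmono2; try apply qle_refl; apply (umono u_mono); lia.
Qed.

Lemma L2 (V : quantale) (k_top : forall v : V, qle v (qk V)) (u : nat -> V)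
  (u_sup : qsup (fun v => exists n, v = u n) = qk V)
  (u_mono : forall n, qle (u n) (u (S n))) (v c : V) :
  (forall n, qle (qtens (u n) (qtens (u n) v)) c) -> qle v c.
Proof.
  intro H. apply (L4 u_sup u_mono). intro n.
  eapply qle_trans; [|apply (H n)].
  apply tmono. apply tmono. rewrite !qtens_assoc. apply ttop; auto.
Qed.

Lemma part1 (V : quantale)
  (k_top : forall v : V, qle v (qk V))
  (u : nat -> V)
  (u_sup : qsup (fun v => exists n, v = u n) = qk V)
  (u_wb : forall n, way_below (u n) (qk V))
  (u_mono : forall n, qle (u n) (u (S n))) :
  (forall (X : Type) (a : X -> X -> V), is_Vcat a -> symmetric a ->
     forall phi psi : X -> V,
       module_from_E a phi -> module_to_E a psi -> mod_adj a phi psi ->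
       forall x, phi x = psi x).
Proof.
  intros X a [Hr Ht] Hs phi psi Hphi Hpsi [Hk Hadj] x.
  apply qle_antisym.
  - apply (L2 k_top u_sup u_mono). intro n.
    destruct (u_wb n _ Hk) as [s [[y ->] Hu]].
    assert (Hy : qle (u n) (psi y)) by (eapply qle_trans; [apply Hu| apply ttop; auto]).
    apply qle_trans with (qtens (psi y) (qtens (psi y) (phi x))).
    { apply tmono2; auto. apply tmono2; auto using qle_refl. }
    eapply qle_trans; [|apply (Hpsi x y)].
    rewrite (qtens_comm _ (psi y)). apply tmono2; auto using qle_refl.
    rewrite Hs. auto.
  - apply (L2 k_top u_sup u_mono). intro n.
    destruct (u_wb n _ Hk) as [s [[y ->] Hu]].
    assert (Hy : qle (u n) (phi y)).
    { eapply qle_trans; [apply Hu|]. rewrite qtens_comm. apply ttop; auto. }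
    apply qle_trans with (qtens (phi y) (qtens (phi y) (psi x))).
    { apply tmono2; auto. apply tmono2; auto using qle_refl. }
    eapply qle_trans; [|apply (Hphi y x)].
    apply tmono. rewrite <- Hs, qtens_comm. auto.
Qed.

Lemma part2dir (V : quantale)
  (k_top : forall v : V, qle v (qk V))
  (u : nat -> V)
  (u_sup : qsup (fun v => exists n, v = u n) = qk V)
  (u_wb : forall n, way_below (u n) (qk V))
  (u_mono : forall n, qle (u n) (u (S n)))
  (Y : Type) (b : Y -> Y -> V) (Hb : is_Vcat b) (M : Y -> Prop)
  (HM : forall y z, M y -> M z -> b y z = b z y) (y z : Y) :
  vclosure b M y -> vclosure b M z -> qle (b y z) (b z y).
Proof.
  destruct Hb as [Hr Ht]. intros Hy Hz.
  apply (L4 u_sup u_mono). intro n.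
  destruct (u_wb n _ Hy) as [s [[m [Mm ->]] Hu]].
  destruct (u_wb n _ Hz) as [s' [[m' [Mm' ->]] Hu']].
  assert (H1 : qle (u n) (b m y)) by (eapply qle_trans; [apply Hu| apply ttop; auto]).
  assert (H2 : qle (u n) (b z m')).
  { eapply qle_trans; [apply Hu'|]. rewrite qtens_comm. apply ttop; auto. }
  apply qle_trans with
    (qtens (b z m') (qtens (b m y) (qtens (b m y) (qtens (b z m') (b y z))))).
  { repeat apply tmono2; auto using qle_refl. }
  eapply qle_trans; [|apply (Ht z m' y)]. apply tmono.
  eapply qle_trans; [|apply (Ht m' m y)].
  rewrite qtens_comm. apply tmono2; [|apply qle_refl].
  rewrite (HM m' m Mm' Mm).
  eapply qle_trans; [|apply (Ht m y m')]. apply tmono.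
  rewrite qtens_comm. apply Ht.
Qed.

Unset Implicit Arguments.

Theorem corollary3p20 (V : quantale)
  (k_top : forall v : V, qle v (qk V))
  (u : nat -> V)
  (u_sup : qsup (fun v => exists n, v = u n) = qk V)
  (u_wb : forall n, way_below (u n) (qk V))
  (u_mono : forall n, qle (u n) (u (S n))) :
  (* (1) *)
  (forall (X : Type) (a : X -> X -> V), is_Vcat a -> symmetric a ->
     forall phi psi : X -> V,
       module_from_E a phi -> module_to_E a psi -> mod_adj a phi psi ->
       forall x, phi x = psi x) /\
  (* (2) *)
  (forall (Y : Type) (b : Y -> Y -> V), is_Vcat b ->
     forall M : Y -> Prop,
       (forall y z, M y -> M z -> b y z = b z y) ->
       forall y z, vclosure b M y -> vclosure b M z -> b y z = b z y) /\
  (* (3) *)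
  (forall (X : Type) (a : X -> X -> V), is_Vcat a -> symmetric a ->
     symmetric (cauchy_hom (a := a))).
Proof.
  assert (P1 := part1 k_top u_sup u_wb u_mono).
  split; [exact P1|]. split.
  - intros Y b Hb M HM y z Hy Hz. apply qle_antisym.
    + exact (part2dir k_top u_sup u_wb u_mono Hb HM Hy Hz).
    + exact (part2dir k_top u_sup u_wb u_mono Hb HM Hz Hy).
  - intros X a Ha Hs.
    assert (D : forall p q : cauchy_completion a,
               qle (cauchy_hom p q) (cauchy_hom q p)).
    { intros [psi [Hpsi [phi [Hphi [Hk Hadj]]]]] [psi' [Hpsi' [phi' [Hphi' [Hk' Hadj']]]]].
      unfold cauchy_hom; simpl.
      set (h := qinf _).
      assert (E := P1 X a Ha Hs phi psi Hphi Hpsi (conj Hk Hadj)).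
      assert (E' := P1 X a Ha Hs phi' psi' Hphi' Hpsi' (conj Hk' Hadj')).
      assert (H : forall z, qle (qtens (psi z) h) (psi' z)).
      { intro z.
        assert (Hz : qle h (qhom (psi z) (psi' z))).
        { apply qsup_least. intros w Hw. apply Hw. exists z; reflexivity. }
        eapply qle_trans; [apply tmono; exact Hz|].
        unfold qhom. rewrite qtens_sup. apply qsup_least.
        intros w [s [Hs' ->]]. exact Hs'. }
      apply qsup_ub. intros s [x ->].
      apply qsup_ub.
      apply (Lsupk Hk). intros s [y ->].
      rewrite E.
      rewrite qtens_assoc.
      rewrite <- (qtens_assoc (psi' x)).
      eapply qle_trans; [|apply (Hpsi x y)].
      apply tmono2; [|apply qle_refl].
      eapply qle_trans; [|apply (Hadj' x y)].
      rewrite E'. apply tmono. rewrite qtens_comm. apply H. }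
    intros p q. apply qle_antisym; apply D.
Qed.
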